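(* Let $n_1,n_2\ge1$, $n=n_1n_2$, and let $R=(r_{i,j})_{i,j=0}^{n-1}$ be a Hermitian positive definite block Toeplitz matrix with $n_2\times n_2$ blocks of size $n_1\times n_1$ (i.e. $R=(R_{b-a})_{a,b=0}^{n_2-1}$, $R_m\in\mathbb{C}^{n_1\times n_1}$, $R_{-m}=R_m^H$). There is an algorithm that evaluates the generalized reflection coefficient recurrences for $R$, computing $a_{k,l},a'_{k,l},p_{k,l},q_{k,l},v_{k,l},v'_{k,l}$ for all pairs $(k,l)$ with $0\le k\le n_1-1$ and $k\le l\le n-1$ (obtaining the quantities with $k\ge n_1$ that the recurrence needs through the identities $q_{k,l}=U^{k\,\mathrm{sec}\,n_1}q_{k\bmod n_1,\,l-k\,\mathrm{sec}\,n_1}$, $v_{k,l}=v_{k\bmod n_1,\,l-k\,\mathrm{sec}\,n_1}$), using $O(n_1^3n_2^2)$ arithmetic operations.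
   Context: For integers $a\ge0$, $b>0$: $a\bmod b$ is the remainder of division of $a$ by $b$ and $a\,\mathrm{sec}\,b:=b\lfloor a/b\rfloor$. $U$ is the $n\times n$ shift matrix with $U_{i+1,i}=1$ ($0\le i\le n-2$), zeros elsewhere, $U^0=I$. Let $e_0,\dots,e_{n-1}$ be the canonical basis column vectors of $\mathbb{C}^n$. Generalized reflection coefficients of $R$: $p_{k,k}=q_{k,k}=e_k$; $v_{k,l}:=q_{k,l}^TRe_l$, $v'_{k,l}:=p_{k,l}^TRe_k$ (positive reals); and for $0\le k<l\le n-1$, recursively in $l-k$: $a_{k,l}=\dfrac{p_{k,l-1}^TRe_l}{v_{k+1,l}}$, $a'_{k,l}=\dfrac{q_{k+1,l}^TRe_k}{v'_{k,l-1}}$, $p_{k,l}=p_{k,l-1}-a_{k,l}q_{k+1,l}$, $q_{k,l}=q_{k+1,l}-a'_{k,l}p_{k,l-1}$, $v_{k,l}=v_{k+1,l}(1-a_{k,l}a'_{k,l})$, $v'_{k,l}=v'_{k,l-1}(1-a_{k,l}a'_{k,l})$. The vector $p_{k,l}$ (resp. $q_{k,l}$) has nonzero entries only in positions $k,\dots,l$. *)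

(* Defs.v *)
From HB Require Import structures.
From mathcomp Require Import all_boot all_order all_algebra.
Set Implicit Arguments. Unset Strict Implicit. Unset Printing Implicit Defensive.
Import Order.TTheory GRing.Theory Num.Theory.
Local Open Scope ring_scope.

Section GRC.
Variable C : numClosedFieldType.
Variable n : nat.

(* canonical basis column vector e_i of C^n (zero vector if i >= n) *)
Definition ev (i : nat) : 'cV[C]_n := \col_(j < n) (j == i :> nat)%:R.

Definition bil (x : 'cV[C]_n) (R : 'M[C]_n) (y : 'cV[C]_n) : C :=
  (x^T *m R *m y) ord0 ord0.

Definition shiftU : 'M[C]_n := \matrix_(i < n, j < n) (i == j.+1 :> nat)%:R.

Definition is_hermitian (R : 'M[C]_n) : Prop := map_mx Num.conj R^T = R.
Definition is_posdef (R : 'M[C]_n) : Prop :=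
  forall x : 'cV[C]_n, x != 0 -> 0 < ((map_mx Num.conj x)^T *m R *m x) ord0 ord0.

Variable R : 'M[C]_n.

(* grc d k = (p_{k,k+d}, q_{k,k+d}, v_{k,k+d}, v'_{k,k+d}) *)
Fixpoint grc (d k : nat) : 'cV[C]_n * 'cV[C]_n * C * C :=
  match d with
  | 0 => (ev k, ev k, bil (ev k) R (ev k), bil (ev k) R (ev k))
  | d'.+1 =>
      let '(p1, _, _, v1') := grc d' k in        (* p_{k,l-1}, v'_{k,l-1} *)
      let '(_, q2, v2, _) := grc d' k.+1 in      (* q_{k+1,l}, v_{k+1,l} *)
      let l := k + d in
      let a := bil p1 R (ev l) / v2 in
      let a' := bil q2 R (ev k) / v1' in
      (p1 - a *: q2, q2 - a' *: p1, v2 * (1 - a * a'), v1' * (1 - a * a'))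
  end.

(* reflection coefficients (a_{k,k+d}, a'_{k,k+d}) for d >= 1 *)
Definition grca (d k : nat) : C * C :=
  match d with
  | 0 => (0, 0)
  | d'.+1 =>
      let '(p1, _, _, v1') := grc d' k in
      let '(_, q2, v2, _) := grc d' k.+1 in
      (bil p1 R (ev (k + d)) / v2, bil q2 R (ev k) / v1')
  end.

Definition gP k l := (grc (l - k) k).1.1.1.
Definition gQ k l := (grc (l - k) k).1.1.2.
Definition gV k l := (grc (l - k) k).1.2.
Definition gV' k l := (grc (l - k) k).2.
Definition gA k l := (grca (l - k) k).1.
Definition gA' k l := (grca (l - k) k).2.

End GRC.

Definition secn (a b : nat) : nat := b * (a %/ b).

(* R = (r_{i,j}) is block Toeplitz with n2 x n2 blocks of size n1 x n1:
   r_{i,j} depends only on (j div n1 - i div n1, i mod n1, j mod n1). *)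

Definition block_toeplitz (C : numClosedFieldType) (n1 n2 : nat)
  (R : 'M[C]_(n1 * n2)) : Prop :=
  forall i j i' j' : 'I_(n1 * n2),
    (i %% n1 = i' %% n1)%N -> (j %% n1 = j' %% n1)%N ->
    ((j %/ n1)%:Z - (i %/ n1)%:Z = (j' %/ n1)%:Z - (i' %/ n1)%:Z) ->
    R i j = R i' j'.

(* Algebraic (straight-line program) model of computation over C.
   Each instruction appends one value; operands refer to indices of
   previously computed values.  The cost of a program is its length. *)
Inductive instr (C : Type) : Type :=
| IIn of nat & nat          (* read input entry r_{i,j} *)
| ICst of C
| IAdd of nat & nat
| ISub of nat & nat
| IMul of nat & nat
| IDiv of nat & nat.

Section SLP.
Variable C : numClosedFieldType.

Definition step (inp : nat -> nat -> C) (vals : seq C) (ins : instr C) : seq C :=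
  rcons vals
    (match ins with
     | IIn i j => inp i j
     | ICst c => c
     | IAdd x y => nth 0 vals x + nth 0 vals y
     | ISub x y => nth 0 vals x - nth 0 vals y
     | IMul x y => nth 0 vals x * nth 0 vals y
     | IDiv x y => nth 0 vals x / nth 0 vals y
     end).

Definition run (inp : nat -> nat -> C) (P : seq (instr C)) : seq C :=
  foldl (step inp) [::] P.

Definition mx_input (n : nat) (R : 'M[C]_n) (i j : nat) : C :=
  match (insub i : option 'I_n), (insub j : option 'I_n) with
  | Some i', Some j' => R i' j'
  | _, _ => 0
  end.
End SLP.
Arguments block_toeplitz {C} n1 n2 R.

(* Main.v *)
Require Import Defs.
From HB Require Import structures.
From mathcomp Require Import all_boot all_order all_algebra zify ring.
Set Implicit Arguments. Unset Strict Implicit. Unset Printing Implicit Defensive.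
Import Order.TTheory GRing.Theory Num.Theory.
Local Open Scope ring_scope.

Module P2.

Section Shift.
Variables (C : numClosedFieldType) (N : nat).

Definition ent (x : 'cV[C]_N) (i : nat) : C :=
  if (insub i : option 'I_N) is Some i' then x i' 0 else 0.

Lemma ent_ord x (i : 'I_N) : ent x i = x i 0.
Proof. by rewrite /ent valK. Qed.

Lemma ent_ge x i : (N <= i)%N -> ent x i = 0.
Proof. by move=> h; rewrite /ent insubF // ltnNge h. Qed.

Lemma entD x y a i : ent (x - a *: y) i = ent x i - a * ent y i.
Proof.
rewrite /ent; case: (insub i) => [i'|]; last by rewrite mulr0 subr0.
by rewrite !mxE.
Qed.

Lemma ent_ev c i : (i < N)%N -> ent (ev C N c) i = (i == c)%:R.
Proof. move=> h; by rewrite -[i]/(nat_of_ord (Ordinal h)) ent_ord mxE. Qed.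

Definition shv (s : nat) (x : 'cV[C]_N) : 'cV[C]_N :=
  \col_(i < N) (if (s <= i)%N then ent x (i - s) else 0).

Lemma ent_shv s x i : (i < N)%N ->
  ent (shv s x) i = if (s <= i)%N then ent x (i - s) else 0.
Proof. by move=> h; rewrite -[i]/(nat_of_ord (Ordinal h)) ent_ord mxE. Qed.

Lemma shv_lin s x y a : shv s (x - a *: y) = shv s x - a *: shv s y.
Proof.
apply/matrixP => i j; rewrite !mxE entD.
by case: ifP => _; rewrite ?mulr0 ?subr0.
Qed.

Lemma U_pow s x : shiftU C N ^+ s *m x = shv s x.
Proof.
elim: s => [|s IH].
  rewrite expr0 mul1mx; apply/matrixP => i j; rewrite !mxE subn0 ent_ord.
  by rewrite (ord1 j).
rewrite exprS -mulmxE -mulmxA IH; apply/matrixP => i j; rewrite !mxE.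
case: (posnP i) => [i0|ipos].
  rewrite big1 ?i0 //= => k _; rewrite !mxE i0 /=; by rewrite mul0r.
have hi' : (i.-1 < N)%N by have := ltn_ord i; lia.
rewrite (bigD1 (Ordinal hi')) //= big1 ?addr0.
  rewrite !mxE /= (_ : (i == i.-1.+1 :> nat) = true) ?mul1r; last by apply/eqP; lia.
  case: ifP => h1; case: ifP => h2 //; try (exfalso; lia).
  by rewrite (_ : (i - s.+1 = i.-1 - s)%N) //; lia.
move=> k hk; rewrite !mxE (_ : (i == k.+1 :> nat) = false) ?mul0r //.
apply/negbTE; apply/eqP => e; move/eqP: hk; apply; apply: val_inj => /=; lia.
Qed.

Lemma bil_evr x (R : 'M[C]_N) l : (l < N)%N ->
  bil x R (ev C N l) = \sum_(i < N) ent x i * mx_input R i l.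
Proof.
move=> hl; rewrite /bil mxE (bigD1 (Ordinal hl)) //= big1 => [|j hj].
  rewrite !mxE eqxx mulr1 addr0; apply: eq_bigr => i _.
  by rewrite !mxE ent_ord -[l]/(nat_of_ord (Ordinal hl)) /mx_input !valK.
rewrite !mxE (_ : (j == l :> nat) = false) ?mulr0 //.
apply/negbTE; apply/eqP => e; move/eqP: hj; apply; exact: val_inj.
Qed.

Lemma bil_evv (R : 'M[C]_N) k : (k < N)%N ->
  bil (ev C N k) R (ev C N k) = mx_input R k k.
Proof.
move=> hk; rewrite bil_evr // (bigD1 (Ordinal hk)) //= big1 => [|j hj].
  by rewrite ent_ev // eqxx mul1r addr0.
rewrite ent_ev // (_ : (j == k :> nat) = false) ?mul0r //.
apply/negbTE; apply/eqP => e; move/eqP: hj; apply; exact: val_inj.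
Qed.


Lemma mx_input_ord (R : 'M[C]_N) (i j : 'I_N) : mx_input R i j = R i j.
Proof. by rewrite /mx_input !valK. Qed.

Lemma grc_supp (R : 'M[C]_N) d k i : (k + d < i)%N ->
  ent (grc R d k).1.1.1 i = 0 /\ ent (grc R d k).1.1.2 i = 0.
Proof.
elim: d k => [|d IH] k /=.
  move=> h; case: (ltnP i N) => hi; last by rewrite !ent_ge.
  by rewrite ent_ev // (_ : (i == k) = false) //; apply/negbTE; apply/eqP; lia.
move=> h.
have [h1 h2] := IH k ltac:(lia).
have [h3 h4] := IH k.+1 ltac:(lia).
move: h1 h2 h3 h4.
case: (grc R d k) => [[[p q] v] v']; case: (grc R d k.+1) => [[[p2 q2] v2] v2'] /=.
move=> e1 e2 e3 e4; rewrite !entD e1 e4; split; ring.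
Qed.

End Shift.

Section Toep.
Variables (C : numClosedFieldType) (n1 n2 : nat).
Hypothesis n1pos : (0 < n1)%N.
Local Notation N := (n1 * n2)%N.
Variable R : 'M[C]_N.
Hypothesis HT : block_toeplitz n1 n2 R.

Lemma Rn_shift j l m : (j + n1 * m < N)%N -> (n1 * m <= l < N)%N ->
  mx_input R (j + n1 * m) l = mx_input R j (l - n1 * m).
Proof.
move=> h1 /andP[h2 h3].
have h4 : (j < N)%N by lia.
have h5 : (l - n1 * m < N)%N by lia.
rewrite (mx_input_ord R (Ordinal h1) (Ordinal h3)).
rewrite (mx_input_ord R (Ordinal h4) (Ordinal h5)).
apply: HT => /=.
- by rewrite addnC mulnC modnMDl.
- by rewrite -{1}(subnK h2) addnC mulnC modnMDl.
- have e1 : ((j + n1 * m) %/ n1 = m + j %/ n1)%N by rewrite addnC mulnC divnMDl.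
  have e2 : (l %/ n1 = m + (l - n1 * m) %/ n1)%N.
    by rewrite -{1}(subnK h2) addnC mulnC divnMDl.
  rewrite e1 e2; lia.
Qed.

Lemma bil_shv x l m : (n1 * m <= l < N)%N ->
  (forall i, (N - n1 * m <= i)%N -> ent x i = 0) ->
  bil (shv (n1 * m) x) R (ev C N l) = bil x R (ev C N (l - n1 * m)).
Proof.
move=> /andP[h1 h2] hx.
rewrite !bil_evr //; last lia.
set s := (n1 * m)%N.
rewrite -(big_mkord xpredT (fun i => ent (shv s x) i * mx_input R i l)).
rewrite -(big_mkord xpredT (fun i => ent x i * mx_input R i (l - s))).
rewrite [LHS](big_cat_nat (leq0n s)) /=; last by rewrite /s; lia.
rewrite [X in X + _]big_nat big1 ?add0r => [|i /andP[_ hi]]; last first.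
  by rewrite ent_shv; [rewrite leqNgt hi mul0r | rewrite /s in hi *; lia].
have E := big_addn 0 N s xpredT (fun i => ent (shv s x) i * mx_input R i l).
rewrite add0n in E; rewrite E.
rewrite [RHS](big_cat_nat (leq0n (N - s))) ?leq_subr //=.
rewrite [X in _ = _ + X]big_nat.
rewrite [X in _ = _ + X]big1 ?addr0; last by move=> i /andP[hi _]; rewrite hx ?mul0r.
apply: eq_big_nat => i /andP[_ hi].
rewrite ent_shv; last by rewrite /s in hi *; lia.
rewrite leq_addl addnK Rn_shift //; rewrite /s in hi *; lia.
Qed.

Lemma grc_shift d k m : (n1 * m <= k)%N -> (k + d < N)%N ->
  grc R d k = (shv (n1 * m) (grc R d (k - n1 * m)).1.1.1,
               shv (n1 * m) (grc R d (k - n1 * m)).1.1.2,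
               (grc R d (k - n1 * m)).1.2, (grc R d (k - n1 * m)).2).
Proof.
set s := (n1 * m)%N.
elim: d k => [|d IH] k hk hd /=.
  have ee : ev C N k = shv s (ev C N (k - s)).
    apply/matrixP => i j; rewrite !mxE.
    case: ifP => hsi.
      rewrite ent_ev; last by have := ltn_ord i; lia.
      congr (_%:R); apply/eqP/eqP; lia.
    by rewrite (_ : (i == k :> nat) = false) //; apply/negbTE/eqP; lia.
  have hb : bil (ev C N k) R (ev C N k) = bil (ev C N (k - s)) R (ev C N (k - s)).
    rewrite {1}ee bil_shv //; first by rewrite /s in hk *; lia.
    move=> i hi; case: (ltnP i N) => hiN; last by rewrite ent_ge.
    by rewrite ent_ev // (_ : (i == k - s)%N = false) //; apply/negbTE/eqP; lia.
  by rewrite -ee hb.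
rewrite (IH k) //; last lia.
rewrite (IH k.+1) //; [|lia|lia].
rewrite (_ : (k.+1 - s = (k - s).+1)%N); last by rewrite /s in hk *; lia.
have sp1 := fun i h => (@grc_supp _ _ R d (k - s) i h).1.
have sq2 := fun i h => (@grc_supp _ _ R d (k - s).+1 i h).2.
move: sp1 sq2.
case: (grc R d (k - s)) => [[[p q] v] v']; case: (grc R d (k - s).+1) => [[[p2 q2] v2] v2'] /=.
move=> sp1 sq2.
rewrite bil_shv; last first.
  - by move=> i hi; apply: sp1; rewrite /s in hi hk *; lia.
  - by rewrite /s in hk *; lia.
rewrite bil_shv; last first.
  - by move=> i hi; apply: sq2; rewrite /s in hi hk *; lia.
  - by rewrite /s in hk *; lia.
rewrite (_ : (k + d.+1 - s = k - s + d.+1)%N); last by rewrite /s in hk *; lia.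
by rewrite !shv_lin.
Qed.

End Toep.

End P2.
Import P2.

Module P3.

Section Run.
Variables (C : numClosedFieldType) (inp : nat -> nat -> C).

Definition evalI (look : nat -> C) (ins : instr C) : C :=
  match ins with
  | IIn i j => inp i j
  | ICst c => c
  | IAdd x y => look x + look y
  | ISub x y => look x - look y
  | IMul x y => look x * look y
  | IDiv x y => look x / look y
  end.

Lemma evalI_ext f g ins : (forall x, f x = g x) -> evalI f ins = evalI g ins.
Proof. by move=> e; case: ins => //= *; rewrite !e. Qed.

Lemma step_eq vals ins :
  step inp vals ins = rcons vals (evalI (fun x => nth 0 vals x) ins).
Proof. by case: ins. Qed.

Lemma foldl_step_cat vals P : exists rest, foldl (step inp) vals P = vals ++ rest.
Proof.
elim: P vals => [|c P IH] vals /=; first by exists [::]; rewrite cats0.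
have [rest ->] := IH (step inp vals c).
by rewrite step_eq; exists (evalI (fun x => nth 0 vals x) c :: rest); rewrite cat_rcons.
Qed.

Lemma size_run P : size (run inp P) = size P.
Proof.
rewrite /run; elim/last_ind: P => [|P c IH] //.
by rewrite -cats1 foldl_cat /= step_eq size_rcons IH size_cat addn1.
Qed.

Lemma run_nth P j : (j < size P)%N ->
  nth 0 (run inp P) j =
  evalI (fun x => if (x < j)%N then nth 0 (run inp P) x else 0) (nth (ICst 0) P j).
Proof.
move=> hj.
have eP : P = take j P ++ nth (ICst 0) P j :: drop j.+1 P.
  by rewrite -drop_nth // cat_take_drop.
have hs : size (run inp (take j P)) = j by rewrite size_run size_take hj.
rewrite {1 2}eP /run foldl_cat /= step_eq.
have [rest ->] := foldl_step_cat (rcons (foldl (step inp) [::] (take j P))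
     (evalI (fun x => nth 0 (foldl (step inp) [::] (take j P)) x) (nth (ICst 0) P j)))
     (drop j.+1 P).
rewrite nth_cat size_rcons -/(run inp (take j P)) hs ltnSn nth_rcons hs ltnn eqxx.
apply: evalI_ext => x.
rewrite nth_cat size_rcons hs ltnS nth_rcons hs.
case: (ltnP x j) => hx; first by rewrite ltnW.
by rewrite nth_default ?hs.
Qed.

End Run.

Section Prog.
Variables (C : numClosedFieldType) (n1 N : nat).

Definition BB := (10 * N + 8)%N.
Definition base (d k : nat) := (2 + BB * (d * n1 + k))%N.
Definition p1pos d' k i := (base d' k + (7 * N + 4 + i))%N.
Definition q2pos d' k i :=
  if (k.+1 < n1)%N then (base d' k.+1 + (9 * N + 4 + i))%N
  else if (n1 <= i)%N then (base d' 0 + (9 * N + 4 + (i - n1)))%N else 0%N.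
Definition v2pos d' k :=
  if (k.+1 < n1)%N then (base d' k.+1 + (10 * N + 6))%N
  else (base d' 0 + (10 * N + 6))%N.
Definition v1pos d' k := (base d' k + (10 * N + 7))%N.

Definition blockS (d' k r : nat) : instr C :=
  let b := base d'.+1 k in
  let l := (k + d'.+1)%N in
  if (r < N)%N then IIn C r l
  else if (r < 2 * N)%N then IMul C (p1pos d' k (r - N)) (b + (r - N))
  else if (r == 2 * N)%N then ICst 0
  else if (r < 3 * N + 1)%N then
    IAdd C (b + (2 * N + (r - (2 * N + 1)))) (b + (N + (r - (2 * N + 1))))
  else if (r == 3 * N + 1)%N then IDiv C (b + (2 * N + N)) (v2pos d' k)
  else if (r < 4 * N + 2)%N then IIn C (r - (3 * N + 2)) k
  else if (r < 5 * N + 2)%N then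
    IMul C (q2pos d' k (r - (4 * N + 2))) (b + (3 * N + 2 + (r - (4 * N + 2))))
  else if (r == 5 * N + 2)%N then ICst 0
  else if (r < 6 * N + 3)%N then
    IAdd C (b + (5 * N + 2 + (r - (5 * N + 3)))) (b + (4 * N + 2 + (r - (5 * N + 3))))
  else if (r == 6 * N + 3)%N then IDiv C (b + (5 * N + 2 + N)) (v1pos d' k)
  else if (r < 7 * N + 4)%N then IMul C (b + (3 * N + 1)) (q2pos d' k (r - (6 * N + 4)))
  else if (r < 8 * N + 4)%N then
    ISub C (p1pos d' k (r - (7 * N + 4))) (b + (6 * N + 4 + (r - (7 * N + 4))))
  else if (r < 9 * N + 4)%N then IMul C (b + (6 * N + 3)) (p1pos d' k (r - (8 * N + 4)))
  else if (r < 10 * N + 4)%N then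
    ISub C (q2pos d' k (r - (9 * N + 4))) (b + (8 * N + 4 + (r - (9 * N + 4))))
  else if (r == 10 * N + 4)%N then IMul C (b + (3 * N + 1)) (b + (6 * N + 3))
  else if (r == 10 * N + 5)%N then ISub C 1 (b + (10 * N + 4))
  else if (r == 10 * N + 6)%N then IMul C (v2pos d' k) (b + (10 * N + 5))
  else IMul C (v1pos d' k) (b + (10 * N + 5)).

Definition block0 (k r : nat) : instr C :=
  if (r == 10 * N + 6)%N || (r == 10 * N + 7)%N then IIn C k k
  else if (7 * N + 4 <= r < 8 * N + 4)%N then ICst (((r - (7 * N + 4))%N == k)%:R)
  else if (9 * N + 4 <= r < 10 * N + 4)%N then ICst (((r - (9 * N + 4))%N == k)%:R)
  else ICst 0.

Definition instrAt (j : nat) : instr C :=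
  if (j == 0)%N then ICst 0 else if (j == 1)%N then ICst 1 else
  let m := ((j - 2) %/ BB)%N in
  let r := ((j - 2) %% BB)%N in
  match (m %/ n1)%N with
  | 0 => block0 (m %% n1) r
  | d'.+1 => blockS d' (m %% n1) r
  end.

Definition prog : seq (instr C) := mkseq instrAt (2 + BB * (N * n1)).

Lemma size_prog : size prog = (2 + BB * (N * n1))%N.
Proof. by rewrite size_mkseq. Qed.

Hypothesis n1pos : (0 < n1)%N.

Lemma decode d k r : (k < n1)%N -> (r < BB)%N ->
  instrAt (base d k + r) = match d with 0 => block0 k r | d'.+1 => blockS d' k r end.
Proof.
move=> hk hr; rewrite /instrAt /base.
rewrite (_ : (2 + BB * (d * n1 + k) + r == 0)%N = false); last by lia.
rewrite (_ : (2 + BB * (d * n1 + k) + r == 1)%N = false); last by lia.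
rewrite (_ : (2 + BB * (d * n1 + k) + r - 2 = (d * n1 + k) * BB + r)%N); last first.
  by rewrite mulnC; lia.
have hB : (0 < BB)%N by rewrite /BB; lia.
rewrite divnMDl // (divn_small hr) addn0 (modnMDl (d * n1 + k) r BB) (modn_small hr).
by rewrite divnMDl // (divn_small hk) addn0 (modnMDl d k n1) (modn_small hk).
Qed.

Lemma base_in d k r : (d < N)%N -> (k < n1)%N -> (r < BB)%N ->
  (base d k + r < size prog)%N.
Proof.
move=> hd hk hr; rewrite size_prog /base.
have h1 : ((d * n1 + k).+1 <= N * n1)%N by nia.
have h2 : (BB * (d * n1 + k) + r < BB * (d * n1 + k).+1)%N by rewrite mulnS; lia.
have h3 : (BB * (d * n1 + k).+1 <= BB * (N * n1))%N by rewrite leq_mul2l h1 orbT.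
lia.
Qed.

Lemma base_lt d k d2 k2 r : (d * n1 + k < d2 * n1 + k2)%N -> (r < BB)%N ->
  (base d k + r < base d2 k2)%N.
Proof.
move=> h hr; rewrite /base.
have h2 : (BB * (d * n1 + k) + r < BB * (d * n1 + k).+1)%N by rewrite mulnS; lia.
have h3 : (BB * (d * n1 + k).+1 <= BB * (d2 * n1 + k2))%N by rewrite leq_mul2l h orbT.
lia.
Qed.

End Prog.

End P3.
Import P3.

Module P4.

Ltac dec := repeat match goal with
 | |- context[if ?c then _ else _] =>
   first [ rewrite (_ : c = true); last by lia
         | rewrite (_ : c = false); last by lia ] end.

Section Correct.
Variables (C : numClosedFieldType) (n1 n2 : nat).
Hypothesis n1pos : (0 < n1)%N.
Local Notation N := (n1 * n2)%N.
Variable R : 'M[C]_N.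
Hypothesis HT : block_toeplitz n1 n2 R.

Local Notation inp := (mx_input R).
Local Notation P := (prog C n1 N).
Local Notation base := (base n1 N).
Local Notation BB := (BB N).
Definition out := run inp P.

Lemma out_at j : (j < size P)%N ->
  nth 0 out j = evalI inp (fun x => if (x < j)%N then nth 0 out x else 0) (instrAt C n1 N j).
Proof. by move=> h; rewrite /out run_nth // nth_mkseq // -(size_prog C n1 N). Qed.

Lemma out0 : nth 0 out 0 = 0.
Proof. by rewrite out_at // size_prog. Qed.

Lemma out1 : nth 0 out 1 = 1.
Proof. by rewrite out_at // size_prog; lia. Qed.

Arguments out : simpl never.
Arguments P3.base : simpl never.
Arguments p1pos : simpl never.
Arguments q2pos : simpl never.
Arguments v1pos : simpl never.
Arguments v2pos : simpl never.

Definition Good d k :=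
  (forall i, (i < N)%N ->
     nth 0 out (base d k + (7 * N + 4 + i)) = ent (grc R d k).1.1.1 i /\
     nth 0 out (base d k + (9 * N + 4 + i)) = ent (grc R d k).1.1.2 i) /\
  nth 0 out (base d k + (10 * N + 6)) = (grc R d k).1.2 /\
  nth 0 out (base d k + (10 * N + 7)) = (grc R d k).2 /\
  ((0 < d)%N -> nth 0 out (base d k + (3 * N + 1)) = (grca R d k).1 /\
                nth 0 out (base d k + (6 * N + 3)) = (grca R d k).2).

Lemma oat d k r : (d < N)%N -> (k < n1)%N -> (r < BB)%N ->
  nth 0 out (base d k + r) =
  evalI inp (fun x => if (x < base d k + r)%N then nth 0 out x else 0)
    (match d with 0 => block0 C N k r | d'.+1 => blockS C n1 N d' k r end).
Proof.
by move=> hd hk hr; rewrite out_at ?base_in // decode.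
Qed.

Lemma good0 k : (k < n1)%N -> (k < N)%N -> Good 0 k.
Proof.
move=> hk hkN; split; [|split; [|split]] => //.
- move=> i hi; rewrite !oat //; try (rewrite /P3.BB; lia); try lia.
  rewrite /block0; dec; rewrite /= !addKn ent_ev //; split; congr (_%:R); lia.
- rewrite oat //; try (rewrite /P3.BB; lia); try lia.
  by rewrite /block0; dec; rewrite /= (bil_evv R hkN).
- rewrite oat //; try (rewrite /P3.BB; lia); try lia.
  by rewrite /block0; dec; rewrite /= (bil_evv R hkN).
Qed.

Lemma good_step d' k : (k < n1)%N -> (k + d'.+1 < N)%N -> Good d' k ->
  ((k.+1 < n1)%N -> Good d' k.+1) -> Good d' 0 -> Good d'.+1 k.
Proof.
move=> hk hkd G1 G2 G0.
have hd : (d'.+1 < N)%N by lia.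
have hBB : forall r, (r <= 10 * N + 7)%N -> (r < BB)%N by move=> r; rewrite /P3.BB; lia.
have hbpos : (1 < base d'.+1 k)%N by rewrite /P3.base; lia.
have VP1 : forall i, (i < N)%N -> (p1pos n1 N d' k i < base d'.+1 k)%N /\
    nth 0 out (p1pos n1 N d' k i) = ent (grc R d' k).1.1.1 i.
  move=> i hi; split; first by rewrite /p1pos; apply: (base_lt n1pos); [lia | apply: hBB; lia].
  by rewrite /p1pos; case: G1 => G _; case: (G i hi).
have VV1 : (v1pos n1 N d' k < base d'.+1 k)%N /\
    nth 0 out (v1pos n1 N d' k) = (grc R d' k).2.
  split; first by rewrite /v1pos; apply: (base_lt n1pos); [lia | apply: hBB; lia].
  by rewrite /v1pos; case: G1 => _ [_ [G _]].
have VQ2 : forall i, (i < N)%N -> (q2pos n1 N d' k i < base d'.+1 k)%N /\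
    nth 0 out (q2pos n1 N d' k i) = ent (grc R d' k.+1).1.1.2 i.
  move=> i hi; rewrite /q2pos; case: ifP => hk1.
    case: (G2 hk1) => Gp _; split; last exact: (Gp i hi).2.
    by apply: (base_lt n1pos); [lia | apply: hBB; lia].
  rewrite (grc_shift n1pos HT (d:=d') (k:=k.+1) (m:=1)); [|lia|lia].
  rewrite /= ent_shv // muln1 (_ : (k.+1 - n1 = 0)%N); last by lia.
  case: ifP => hi1.
    split; first by apply: (base_lt n1pos); [lia | apply: hBB; lia].
    by case: G0 => Gp _; case: (Gp (i - n1)%N ltac:(lia)).
  by split; [lia | rewrite out0].
have VV2 : (v2pos n1 N d' k < base d'.+1 k)%N /\
    nth 0 out (v2pos n1 N d' k) = (grc R d' k.+1).1.2.
  rewrite /v2pos; case: ifP => hk1.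
    case: (G2 hk1) => _ [Gv _]; split; last exact: Gv.
    by apply: (base_lt n1pos); [lia | apply: hBB; lia].
  rewrite (grc_shift n1pos HT (d:=d') (k:=k.+1) (m:=1)); [|lia|lia].
  rewrite /= muln1 (_ : (k.+1 - n1 = 0)%N); last by lia.
  split; first by apply: (base_lt n1pos); [lia | apply: hBB; lia].
  by case: G0 => _ [Gv _].
move: VP1 VV1 VQ2 VV2.
case E1: (grc R d' k) => [[[p1 q1] v1] v1'].
case E2: (grc R d' k.+1) => [[[p2 q2] v2] v2'] /= VP1 VV1 VQ2 VV2.
have F1 : forall i, (i < N)%N -> nth 0 out (base d'.+1 k + i) = inp i (k + d'.+1).
  move=> i hi; rewrite oat //; last (apply: hBB; lia).
  by rewrite /blockS; cbv beta iota zeta; dec.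
have F2 : forall i, (i < N)%N ->
    nth 0 out (base d'.+1 k + (N + i)) = ent p1 i * inp i (k + d'.+1).
  move=> i hi; have [h1 h2] := VP1 i hi.
  rewrite oat //; last (apply: hBB; lia).
  rewrite /blockS; cbv beta iota zeta; dec; rewrite addKn /=; dec.
  by rewrite h2 F1.
have F3 : forall i, (i <= N)%N ->
    nth 0 out (base d'.+1 k + (2 * N + i)) = \sum_(j < i) ent p1 j * inp j (k + d'.+1).
  elim => [|i IH] hi.
    rewrite addn0 oat //; last (apply: hBB; lia).
    by rewrite /blockS; cbv beta iota zeta; dec; rewrite big_ord0.
  rewrite oat //; last (apply: hBB; lia).
  rewrite /blockS; cbv beta iota zeta; dec.
  rewrite (_ : (2 * N + i.+1 - (2 * N + 1) = i)%N); last by lia.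
  rewrite /=; dec.
  by rewrite IH ?F2 ?big_ord_recr //; lia.
have [hv2 ev2] := VV2.
have [hv1 ev1] := VV1.
have FA : nth 0 out (base d'.+1 k + (3 * N + 1)) = bil p1 R (ev C N (k + d'.+1)) / v2.
  rewrite oat //; last (apply: hBB; lia).
  rewrite /blockS; cbv beta iota zeta; dec; rewrite /=; dec.
  by rewrite F3 // ev2 (bil_evr p1 R (l:=(k + d'.+1)%N)) //; lia.
have F4 : forall i, (i < N)%N -> nth 0 out (base d'.+1 k + (3 * N + 2 + i)) = inp i k.
  move=> i hi; rewrite oat //; last (apply: hBB; lia).
  by rewrite /blockS; cbv beta iota zeta; dec; rewrite addKn.
have F5 : forall i, (i < N)%N ->
    nth 0 out (base d'.+1 k + (4 * N + 2 + i)) = ent q2 i * inp i k.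
  move=> i hi; have [h1 h2] := VQ2 i hi.
  rewrite oat //; last (apply: hBB; lia).
  rewrite /blockS; cbv beta iota zeta; dec; rewrite addKn /=; dec.
  by rewrite h2 F4.
have F6 : forall i, (i <= N)%N ->
    nth 0 out (base d'.+1 k + (5 * N + 2 + i)) = \sum_(j < i) ent q2 j * inp j k.
  elim => [|i IH] hi.
    rewrite addn0 oat //; last (apply: hBB; lia).
    by rewrite /blockS; cbv beta iota zeta; dec; rewrite big_ord0.
  rewrite oat //; last (apply: hBB; lia).
  rewrite /blockS; cbv beta iota zeta; dec.
  rewrite (_ : (5 * N + 2 + i.+1 - (5 * N + 3) = i)%N); last by lia.
  rewrite /=; dec.
  by rewrite IH ?F5 ?big_ord_recr //; lia.
have FA' : nth 0 out (base d'.+1 k + (6 * N + 3)) = bil q2 R (ev C N k) / v1'.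
  rewrite oat //; last (apply: hBB; lia).
  rewrite /blockS; cbv beta iota zeta; dec; rewrite /=; dec.
  by rewrite F6 // ev1 (bil_evr q2 R (l:=k)) //; lia.
set a := bil p1 R (ev C N (k + d'.+1)) / v2 in FA.
set a' := bil q2 R (ev C N k) / v1' in FA'.
have F7 : forall i, (i < N)%N ->
    nth 0 out (base d'.+1 k + (6 * N + 4 + i)) = a * ent q2 i.
  move=> i hi; have [h1 h2] := VQ2 i hi.
  rewrite oat //; last (apply: hBB; lia).
  rewrite /blockS; cbv beta iota zeta; dec; rewrite addKn /=; dec.
  by rewrite h2 FA.
have F8 : forall i, (i < N)%N ->
    nth 0 out (base d'.+1 k + (7 * N + 4 + i)) = ent p1 i - a * ent q2 i.
  move=> i hi; have [h1 h2] := VP1 i hi.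
  rewrite oat //; last (apply: hBB; lia).
  rewrite /blockS; cbv beta iota zeta; dec; rewrite !addKn /=; dec.
  by rewrite h2 F7.
have F9 : forall i, (i < N)%N ->
    nth 0 out (base d'.+1 k + (8 * N + 4 + i)) = a' * ent p1 i.
  move=> i hi; have [h1 h2] := VP1 i hi.
  rewrite oat //; last (apply: hBB; lia).
  rewrite /blockS; cbv beta iota zeta; dec; rewrite addKn /=; dec.
  by rewrite h2 FA'.
have F10 : forall i, (i < N)%N ->
    nth 0 out (base d'.+1 k + (9 * N + 4 + i)) = ent q2 i - a' * ent p1 i.
  move=> i hi; have [h1 h2] := VQ2 i hi.
  rewrite oat //; last (apply: hBB; lia).
  rewrite /blockS; cbv beta iota zeta; dec; rewrite !addKn /=; dec.
  by rewrite h2 F9.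
have F11 : nth 0 out (base d'.+1 k + (10 * N + 4)) = a * a'.
  rewrite oat //; last (apply: hBB; lia).
  rewrite /blockS; cbv beta iota zeta; dec; rewrite /=; dec.
  by rewrite FA FA'.
have F12 : nth 0 out (base d'.+1 k + (10 * N + 5)) = 1 - a * a'.
  rewrite oat //; last (apply: hBB; lia).
  rewrite /blockS; cbv beta iota zeta; dec; rewrite /=; dec.
  by rewrite out1 F11.
have F13 : nth 0 out (base d'.+1 k + (10 * N + 6)) = v2 * (1 - a * a').
  rewrite oat //; last (apply: hBB; lia).
  rewrite /blockS; cbv beta iota zeta; dec; rewrite /=; dec.
  by rewrite ev2 F12.
have F14 : nth 0 out (base d'.+1 k + (10 * N + 7)) = v1' * (1 - a * a').
  rewrite oat //; last (apply: hBB; lia).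
  rewrite /blockS; cbv beta iota zeta; dec; rewrite /=; dec.
  by rewrite ev1 F12.
have EG : grc R d'.+1 k = (p1 - a *: q2, q2 - a' *: p1, v2 * (1 - a * a'), v1' * (1 - a * a')).
  by rewrite /= E1 E2.
have EA : grca R d'.+1 k = (a, a').
  by rewrite /= E1 E2.
rewrite /Good EG EA /=.
split; [|split; [|split]].
- by move=> i hi; rewrite F8 // F10 // !entD.
- exact: F13.
- exact: F14.
- by move=> _; split; [exact: FA | exact: FA'].
Qed.


Lemma good_all d : forall k, (k < n1)%N -> (k + d < N)%N -> Good d k.
Proof.
elim: d => [|d IH] k hk hkd; first by apply: good0; lia.
apply: good_step => //.
- by apply: IH; lia.
- by move=> hk1; apply: IH; lia.
- by apply: IH; lia.
Qed.

Lemma part2 k l : (k <= l < N)%N ->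
  gQ R k l = shiftU C N ^+ secn k n1 *m gQ R (k %% n1) (l - secn k n1) /\
  gV R k l = gV R (k %% n1) (l - secn k n1).
Proof.
move=> /andP[h1 h2].
rewrite U_pow /secn /gQ /gV.
have hm : (n1 * (k %/ n1) <= k)%N by rewrite mulnC leq_divM.
have ek : (k %% n1 = k - n1 * (k %/ n1))%N by have := divn_eq k n1; lia.
have el : (l - n1 * (k %/ n1) - k %% n1 = l - k)%N by lia.
rewrite el ek (grc_shift n1pos HT (d := (l - k)%N) (k := k) (m := (k %/ n1)%N)) //=; lia.
Qed.

End Correct.

End P4.
Import P4.

Unset Implicit Arguments.

Theorem theorem2 :
  exists K : nat,
  forall (C : numClosedFieldType) (n1 n2 : nat), (0 < n1)%N -> (0 < n2)%N ->
  exists (P : seq (instr C))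
         (pa pa' pv pv' : nat -> nat -> nat)
         (pp pq : nat -> nat -> 'I_(n1 * n2) -> nat),
    (size P <= K * n1 ^ 3 * n2 ^ 2)%N /\
    forall R : 'M[C]_(n1 * n2),
      is_hermitian R -> is_posdef R -> block_toeplitz n1 n2 R ->
      let out := run (mx_input R) P in
      (forall k l : nat, (k < n1)%N -> (k <= l < n1 * n2)%N ->
         [/\ (k < l)%N -> nth 0 out (pa k l) = gA R k l,
             (k < l)%N -> nth 0 out (pa' k l) = gA' R k l,
             nth 0 out (pv k l) = gV R k l,
             nth 0 out (pv' k l) = gV' R k l &
             forall i, nth 0 out (pp k l i) = gP R k l i ord0 /\
                       nth 0 out (pq k l i) = gQ R k l i ord0]) /\
      (forall k l : nat, (k <= l < n1 * n2)%N ->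
         gQ R k l = shiftU C (n1 * n2) ^+ secn k n1 *m gQ R (k %% n1) (l - secn k n1) /\
         gV R k l = gV R (k %% n1) (l - secn k n1)).
Proof.
exists 20%N => C n1 n2 h1 h2.
pose N := (n1 * n2)%N.
exists (prog C n1 N).
exists (fun k l => base n1 N (l - k) k + (3 * N + 1))%N.
exists (fun k l => base n1 N (l - k) k + (6 * N + 3))%N.
exists (fun k l => base n1 N (l - k) k + (10 * N + 6))%N.
exists (fun k l => base n1 N (l - k) k + (10 * N + 7))%N.
exists (fun k l i => base n1 N (l - k) k + (7 * N + 4 + i))%N.
exists (fun k l i => base n1 N (l - k) k + (9 * N + 4 + i))%N.
split.
  rewrite size_prog /BB /N.
  have hN : (1 <= n1 * n2)%N by nia.
  have e : (20 * n1 ^ 3 * n2 ^ 2 = 20 * ((n1 * n2) * (n1 * n2) * n1))%N by ring.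
  rewrite e.
  set M := (n1 * n2)%N in hN *.
  nia.
move=> R _ _ HT /=.
split; last by move=> k l hkl; apply: part2.
move=> k l hk /andP[hkl hl].
have [Gpq [Gv [Gv' Ga]]] := good_all h1 HT (d := (l - k)%N) hk ltac:(lia).
split.
- by move=> hlt; case: (Ga ltac:(lia)).
- by move=> hlt; case: (Ga ltac:(lia)).
- exact: Gv.
- exact: Gv'.
- move=> i; rewrite -!ent_ord; exact: Gpq.
Qed.
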